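(* Let $\theta_i>0$, $m_i>0$, $\sigma>0$, $p>0$, $M=\sum_i m_i$, and define $\mathbb F:\mathbb R^N_+\to\mathbb R^N$ by $$\mathbb F(\mathbf y)_i=My_i-\sum_{k=1}^N m_ky_k-\sigma(\theta_i-y_i^p)y_i .$$ If $\mathbf y\in\mathbb R^N_+$ satisfies $\mathbb F(\mathbf y)=0$, then $d_i:=M+\sigma(p+1)y_i^p-\sigma\theta_i>0$ for all $i$, and the Jacobian matrix $D\mathbb F(\mathbf y)=\operatorname{diag}(d_1,\dots,d_N)-\mathbf 1\mathbf m^T$ (where $\mathbf 1=(1,\dots,1)^T$, $\mathbf m=(m_1,\dots,m_N)^T$) has all leading principal minors positive; in particular $\det D\mathbb F(\mathbf y)=\prod_i d_i\,\big(1-\sum_k m_k/d_k\big)>0$.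
   Context: $\mathbb R^N_+$ denotes the set of vectors with all coordinates strictly positive. *)

(* Defs.v *)
From HB Require Import structures.
From mathcomp Require Import all_boot all_order all_algebra.
From mathcomp Require Import all_classical all_reals all_analysis.
Set Implicit Arguments. Unset Strict Implicit. Unset Printing Implicit Defensive.
Import Order.TTheory GRing.Theory Num.Theory.
Import numFieldNormedType.Exports.
Local Open Scope ring_scope.

Definition Mtot (R : realType) (N : nat) (m : 'rV[R]_N) : R := \sum_(k < N) m 0 k.

(* F(y)_i = M y_i - sum_k m_k y_k - sigma (theta_i - y_i^p) y_i
   (defined on all of R^N via powR; only used at points of the positive orthant) *)
Definition FF (R : realType) (N : nat) (theta m : 'rV[R]_N) (sigma p : R)
  (y : 'rV[R]_N) : 'rV[R]_N :=
  \row_(i < N) (Mtot m * y 0 i - \sum_(k < N) m 0 k * y 0 k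
                - sigma * (theta 0 i - y 0 i `^ p) * y 0 i).

Definition dd (R : realType) (N : nat) (theta m : 'rV[R]_N) (sigma p : R)
  (y : 'rV[R]_N) (i : 'I_N) : R :=
  Mtot m + sigma * (p + 1) * y 0 i `^ p - sigma * theta 0 i.

Definition JF (R : realType) (N : nat) (theta m : 'rV[R]_N) (sigma p : R)
  (y : 'rV[R]_N) : 'M[R]_N :=
  diag_mx (\row_(i < N) dd theta m sigma p y i) - const_mx 1 *m m.

Definition lead_submx (R : ringType) (n k : nat) (hk : (k <= n)%N)
  (A : 'M[R]_n) : 'M[R]_k :=
  \matrix_(i < k, j < k) A (widen_ord hk i) (widen_ord hk j).

(* Main.v *)
Require Import Defs.
From HB Require Import structures.
From mathcomp Require Import all_boot all_order all_algebra.
From mathcomp Require Import all_classical all_reals all_analysis.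
From mathcomp Require Import ring lra.
Import Order.TTheory GRing.Theory Num.Theory.
Import numFieldNormedType.Exports.
Local Open Scope ring_scope.

Lemma det_rank1 (F : fieldType) n (d u : 'rV[F]_n) :
  (forall i, d 0 i != 0) ->
  \det (diag_mx d - const_mx 1 *m u) = \prod_i d 0 i * (1 - \sum_i u 0 i / d 0 i).
Proof.
move=> dn0.
pose c : 'cV[F]_n := const_mx 1.
pose w : 'cV[F]_n := \col_i (d 0 i)^-1.
pose B : 'M[F]_(1 + n) := block_mx (1 : 'M[F]_1) u c (diag_mx d).
have Dw : diag_mx d *m w = c.
  apply/matrixP=> i j; rewrite mul_diag_mx !mxE mulfV //.
have E1 : B = block_mx 1 0 c 1 *m block_mx 1 u 0 (diag_mx d - c *m u).
  rewrite mulmx_block; rewrite ?mul1mx ?mul0mx ?mulmx0 ?mulmx1 ?addr0 ?add0r.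
  by rewrite addrC subrK.
have E2 : B = block_mx (1 - u *m w) u 0 (diag_mx d) *m block_mx 1 0 w 1.
  rewrite mulmx_block ?mulmx1 ?mulmx0 ?mul0mx ?add0r ?addr0 Dw.
  by rewrite subrK.
have := congr1 (fun A => \det A) (etrans (esym E1) E2); rewrite /= !det_mulmx.
rewrite det_lblock det_ublock det_lblock det_ublock !det1 det_diag !mul1r mulr1.
move=> ->; rewrite det_mx11 mulrC; congr (_ * _).
rewrite !mxE eqxx mulr1n; congr (_ - _).
by apply: eq_bigr => i _; rewrite !mxE.
Qed.

Section D.
Variables (R : realType).

Lemma is_derive_line (V W : normedModType R) (f : V -> W) x v df :
  is_derive (0:R) 1 (fun h : R => f (h *: v + x)) df -> is_derive x v f df.
Proof.
case=> H1 H2; split; first by apply/derivable1P.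
rewrite -H2 /derive; set g1 := fun h => h^-1 *: _; set g2 := fun h => h^-1 *: _; suff -> : g1 = g2 by [].
by rewrite funeqE /g1 /g2 => h /=; rewrite addr0 scale0r add0r [_%:A]mulr1.
Qed.

Lemma DD (f g : R -> R) (x df dg : R) : is_derive x 1 f df -> is_derive x 1 g dg ->
  is_derive x 1 (fun z => f z + g z) (df + dg).
Proof. by move=> a b; have := is_deriveD a b. Qed.
Lemma DB (f g : R -> R) (x df dg : R) : is_derive x 1 f df -> is_derive x 1 g dg ->
  is_derive x 1 (fun z => f z - g z) (df - dg).
Proof. by move=> a b; have := is_deriveB a b. Qed.
Lemma DM (f g : R -> R) (x df dg : R) : is_derive x 1 f df -> is_derive x 1 g dg ->
  is_derive x 1 (fun z => f z * g z) (f x * dg + g x * df).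
Proof. by move=> a b; have := is_deriveM a b. Qed.
Lemma DC (x c : R) : is_derive x 1 (fun _ : R => c) 0.
Proof. exact: is_derive_cst. Qed.
Lemma DS n (h : 'I_n -> R -> R) (x : R) dh : (forall i, is_derive x 1 (h i) (dh i)) ->
  is_derive x 1 (fun z => \sum_(i < n) h i z) (\sum_(i < n) dh i).
Proof.
move=> H; have := is_derive_sum H.
by rewrite (_ : (\sum_(i < n) h i) = (fun z => \sum_(i < n) h i z)) // funeqE => z; rewrite fct_sumE.
Qed.
Lemma DL (x c y : R) : is_derive x 1 (fun t => t * c + y) c.
Proof.
have h1 : is_derive x 1 (fun t : R => t) 1 := is_derive_id x 1.
have h2 := @DM (fun t => t) (fun _ => c) x 1 0 h1 (DC x c).
have := @DD (fun t => t * c) (fun _ => y) x _ 0 h2 (DC x y).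
by rewrite mulr0 mulr1 addr0 add0r.
Qed.
Lemma DP (c y p : R) : 0 < y ->
  is_derive (0:R) 1 (fun t => (t * c + y) `^ p) (p * y `^ (p - 1) * c).
Proof.
move=> y0.
have h1 : is_derive (0 * c + y) 1 (fun z : R => z `^ p) (p * y `^ (p - 1)).
  by rewrite mul0r add0r; exact: (@is_derive1_powR R p y y0).
have := @is_derive1_comp R (fun z => z `^ p) (fun t => t * c + y) 0 _ _ h1 (DL 0 c y).
by [].
Qed.
End D.
Arguments DD {R f g x df dg}. Arguments DB {R f g x df dg}. Arguments DM {R f g x df dg}.
Arguments DC {R}. Arguments DL {R}. Arguments DP {R}. Arguments DS {R n h x dh}.

Lemma deriv_part (R : realType) (N : nat) (theta m : 'rV[R]_N) (sigma p : R) (y : 'rV[R]_N)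
  (hy : forall i, 0 < y 0 i) (i j : 'I_N) :
  is_derive y (delta_mx 0 j : 'rV[R]_N) (fun z => FF theta m sigma p z 0 i)
                   (JF theta m sigma p y i j).
Proof.
apply: is_derive_line.
pose c := fun k : 'I_N => ((k == j)%:R : R).
have E : (fun h : R => FF theta m sigma p (h *: delta_mx 0 j + y) 0 i) =
  fun t => Mtot m * (t * c i + y 0 i) - \sum_k m 0 k * (t * c k + y 0 k)
     - sigma * (theta 0 i - (t * c i + y 0 i) `^ p) * (t * c i + y 0 i).
  rewrite funeqE => t; rewrite /FF mxE.
  under eq_bigr => k _ do rewrite !mxE eqxx /=.
  by rewrite !mxE eqxx /=.
rewrite E.
have Ha k := DL 0 (c k) (y 0 k).
have H := DB (DB (DM (DC 0 (Mtot m)) (Ha i)) (DS (fun k => DM (DC 0 (m 0 k)) (Ha k))))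
   (DM (DM (DC 0 sigma) (DB (DC 0 (theta 0 i)) (DP (c i) (y 0 i) p (hy i)))) (Ha i)).
apply: (is_derive_eq H).
rewrite /JF /dd !mxE big_ord1 !mxE.
rewrite !mul0r !add0r !mulr0 !addr0.
under eq_bigr => k _ do rewrite mul0r add0r mulr0 addr0.
rewrite (bigD1 j) //= big1 ?addr0; last by move=> k /negbTE Hk; rewrite /c Hk mulr0.
have Hp : y 0 i `^ (p - 1) * y 0 i = y 0 i `^ p.
  rewrite powRB; last by rewrite (gt_eqF (hy i)) implybT.
  by rewrite powRr1 ?ltW // divfK // (gt_eqF (hy i)).
rewrite /c eqxx mulr1 -Hp.
case: (i == j); rewrite ?mulr1n ?mulr0n ?mulr1 ?mulr0; ring.
Qed.

Theorem mainTheorem12 (R : realType) (N : nat) (theta m : 'rV[R]_N)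
  (sigma p : R) (y : 'rV[R]_N) :
  (forall i, 0 < theta 0 i) -> (forall i, 0 < m 0 i) -> 0 < sigma -> 0 < p ->
  (forall i, 0 < y 0 i) ->
  FF theta m sigma p y = 0 ->
  [/\ (forall i, 0 < dd theta m sigma p y i),
      (* JF is the Jacobian of FF at y: entry (i,j) = d F_i / d y_j *)
      (forall i j : 'I_N,
         is_derive y (delta_mx 0 j : 'rV[R]_N) (fun z => FF theta m sigma p z 0 i)
                   (JF theta m sigma p y i j)),
      (forall (k : nat) (hk : (1 <= k <= N)%N),
         0 < \det (lead_submx (proj2 (andP hk)) (JF theta m sigma p y))),
      \det (JF theta m sigma p y)
        = (\prod_(i < N) dd theta m sigma p y i)
          * (1 - \sum_(k < N) m 0 k / dd theta m sigma p y k)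
    & 0 < \det (JF theta m sigma p y)].
Proof.
move=> Hth Hm Hs Hp Hy HF.
pose S := \sum_k m 0 k * y 0 k.
have HFi i : (Mtot m - sigma * theta 0 i + sigma * y 0 i `^ p) * y 0 i = S.
  have H : Mtot m * y 0 i - S - sigma * (theta 0 i - y 0 i `^ p) * y 0 i = 0.
    by have := congr1 (fun A : 'rV[R]_N => A 0 i) HF; rewrite /FF !mxE.
  apply/eqP; rewrite -subr_eq0; apply/eqP; rewrite -H; ring.
have Spos (i0 : 'I_N) : 0 < S.
  rewrite /S (bigD1 i0) //=.
  have h1 : 0 < m 0 i0 * y 0 i0 by apply: mulr_gt0.
  have h2 : 0 <= \sum_(i < N | i != i0) m 0 i * y 0 i.
    by apply: sumr_ge0 => i _; apply: mulr_ge0; apply: ltW.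
  lra.
have Hdy i : S < dd theta m sigma p y i * y 0 i.
  have -> : dd theta m sigma p y i * y 0 i = S + sigma * p * y 0 i `^ p * y 0 i.
    by rewrite -(HFi i) /dd; ring.
  by rewrite ltrDl !mulr_gt0 // powR_gt0.
have Hd i : 0 < dd theta m sigma p y i.
  by rewrite -(pmulr_lgt0 _ (Hy i)); apply: lt_trans (Spos i) (Hdy i).
have Hsum : \sum_k m 0 k / dd theta m sigma p y k < 1.
  have [i0 _|Hn] := pickP (fun _ : 'I_N => true); last first.
    by rewrite big1 ?ltr01 // => i; have := Hn i.
  apply: (@lt_le_trans _ _ (\sum_k m 0 k * y 0 k / S)).
    apply: ltr_sum; first by apply/hasP; exists i0; rewrite ?mem_index_enum.
    move=> k _; rewrite ltr_pdivlMr ?(Spos i0) //.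
    have e : m 0 k / dd theta m sigma p y k * (dd theta m sigma p y k * y 0 k)
           = m 0 k * y 0 k.
      by field; rewrite gt_eqF.
    rewrite -[X in _ < X]e ltr_pM2l ?Hdy // divr_gt0 //.
  by rewrite -mulr_suml divff // gt_eqF // (Spos i0).
have Hdet : \det (JF theta m sigma p y)
        = (\prod_(i < N) dd theta m sigma p y i)
          * (1 - \sum_(k < N) m 0 k / dd theta m sigma p y k).
  rewrite /JF det_rank1; last by move=> i; rewrite mxE gt_eqF.
  under eq_bigr do rewrite mxE.
  by under [X in _ * (1 - X)]eq_bigr do rewrite mxE.
split => //.
- by move=> i j; apply: deriv_part.
- move=> k hk; set w := widen_ord (proj2 (andP hk)).
  have -> : lead_submx (proj2 (andP hk)) (JF theta m sigma p y) =
     diag_mx (\row_i dd theta m sigma p y (w i)) - const_mx 1 *m (\row_i m 0 (w i)).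
    apply/matrixP => a b; rewrite /lead_submx /JF !mxE.
    by rewrite !big_ord1 !mxE.
  rewrite det_rank1; last by move=> i; rewrite mxE gt_eqF.
  apply: mulr_gt0; first by apply: prodr_gt0 => i _; rewrite mxE.
  rewrite subr_gt0; apply: le_lt_trans Hsum.
  under eq_bigr do rewrite !mxE.
  rewrite -(big_ord_narrow (F := fun i => m 0 i / dd theta m sigma p y i) (proj2 (andP hk))).
  rewrite [X in _ <= X](bigID (fun i : 'I_N => (i < k)%N)) /= lerDl.
  by apply: sumr_ge0 => i _; rewrite divr_ge0 // ltW.
- rewrite Hdet; apply: mulr_gt0; last by rewrite subr_gt0.
  by apply: prodr_gt0.
Qed.
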